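(* Let $S$ be a compact metric space and $h:\mathbb{R}^d\times S\to\mathbb{R}^d$ a jointly continuous map for which there is $L>0$ with $\lVert h(x_1,y)-h(x_2,y)\rVert\le L\lVert x_1-x_2\rVert$ for all $x_1,x_2\in\mathbb{R}^d$, $y\in S$. For $c\ge 1$ put $h_c(x,y):=h(cx,y)/c$, and let $h_\infty(x,y)$ be the set of all $u\in\mathbb{R}^d$ with $\liminf_{c\to\infty}\lVert h_c(x,y)-u\rVert=0$. Assume (S1): whenever $c_n\uparrow\infty$, $y_n\to y$ in $S$, $x\in\mathbb{R}^d$ and $\lim_{n\to\infty}h_{c_n}(x,y_n)=u$ for some $u\in\mathbb{R}^d$, then $u\in h_\infty(x,y)$. Suppose $x_n\to x$ in $\mathbb{R}^d$, $y_n\to y$ in $S$, $c_n\uparrow\infty$ and $\lim_{n\to\infty}h_{c_n}(x_n,y_n)=u$. Then $u\in h_\infty(x,y)$. *)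

(* Defs.v *)
From HB Require Import structures.
From mathcomp Require Import all_boot all_order all_algebra.
From mathcomp Require Import all_classical all_reals all_analysis.
Set Implicit Arguments. Unset Strict Implicit. Unset Printing Implicit Defensive.
Import Order.TTheory GRing.Theory Num.Theory.
Import numFieldNormedType.Exports.
Local Open Scope classical_set_scope.
Local Open Scope ring_scope.

(* R^d is represented by row vectors 'rV[R]_d; ||.|| is the Euclidean norm. *)
Definition enorm {R : realType} {d : nat} (v : 'rV[R]_d) : R :=
  Num.sqrt (\sum_(i < d) (v ord0 i) ^+ 2).

Definition hc {R : realType} {d : nat} {S : Type}
  (h : 'rV[R]_d -> S -> 'rV[R]_d) (c : R) (x : 'rV[R]_d) (y : S) : 'rV[R]_d :=
  c^-1 *: h (c *: x) y.

(* h_oo(x,y) := { u | liminf_{c -> oo, c >= 1} ||h_c(x,y) - u|| = 0 }.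
   Since the function is nonnegative, liminf = 0 unfolds to: for every
   eps > 0 and every bound M there is c >= M (c >= 1) with value < eps. *)
Definition h_infty {R : realType} {d : nat} {S : Type}
  (h : 'rV[R]_d -> S -> 'rV[R]_d) (x : 'rV[R]_d) (y : S) : set 'rV[R]_d :=
  [set u | forall eps : R, 0 < eps -> forall M : R,
     exists c : R, M <= c /\ 1 <= c /\ enorm (hc h c x y - u) < eps].

(* Main.v *)
Require Import Defs.
From HB Require Import structures.
From mathcomp Require Import all_boot all_order all_algebra.
From mathcomp Require Import all_classical all_reals all_analysis.
Import Order.TTheory GRing.Theory Num.Theory.
Import numFieldNormedType.Exports.
Local Open Scope classical_set_scope.
Local Open Scope ring_scope.

Lemma coef_le_norm (R : realType) d (v : 'rV[R]_d) i : `|v ord0 i| <= `|v|.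
Proof.
have -> : `|v| = mx_norm v by [].
rewrite mx_normrE.
exact: (le_bigmax _ (fun ij : 'I_1 * 'I_d => `|v ij.1 ij.2|) (ord0, i)).
Qed.

Lemma enormZ (R : realType) d (a : R) (v : 'rV[R]_d) :
  enorm (a *: v) = `|a| * enorm v.
Proof.
rewrite /enorm.
under eq_bigr => i _ do rewrite mxE exprMn.
by rewrite -mulr_sumr sqrtrM ?sqr_ge0 // sqrtr_sqr.
Qed.

Lemma norm_le_enorm (R : realType) d (v : 'rV[R]_d) : `|v| <= enorm v.
Proof.
have -> : `|v| = mx_norm v by [].
have [->|] := eqVneq (mx_norm v) 0.
  by rewrite sqrtr_ge0.
move=> /mx_norm_neq0 [[i j] ->] /=.
rewrite (ord1 i) /enorm -sqrtr_sqr ler_wsqrtr //.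
rewrite (bigD1 j) //= lerDl sumr_ge0 // => k _; exact: sqr_ge0.
Qed.

Lemma enorm_le (R : realType) d (v : 'rV[R]_d) :
  enorm v <= Num.sqrt (d%:R) * `|v|.
Proof.
rewrite /enorm -(ger0_norm (normr_ge0 v)) -sqrtr_sqr -sqrtrM ?ler0n //.
apply: ler_wsqrtr.
rewrite mulr_natl -[X in _ *+ X](card_ord d) -sumr_const ler_sum // => i _.
rewrite -real_normK ?num_real // ler_sqr ?nnegrE //.
exact: coef_le_norm.
Qed.

Theorem lemma1 (R : realType) (d : nat) (S : pseudoMetricType R)
  (h : 'rV[R]_d -> S -> 'rV[R]_d)
  (S_compact : compact [set: S]) (S_hausdorff : hausdorff_space S)
  (h_cont : continuous (fun p : 'rV[R]_d * S => h p.1 p.2))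
  (L : R) (L_gt0 : 0 < L)
  (h_lip : forall (x1 x2 : 'rV[R]_d) (y : S),
     enorm (h x1 y - h x2 y) <= L * enorm (x1 - x2))
  (S1 : forall (c : nat -> R) (yn : nat -> S) (y : S) (x u : 'rV[R]_d),
     (forall n, 1 <= c n) ->
     (forall m n, (m <= n)%N -> c m <= c n) ->
     c n @[n --> \oo] --> +oo ->
     yn n @[n --> \oo] --> y ->
     hc h (c n) x (yn n) @[n --> \oo] --> u ->
     h_infty h x y u)
  (xn : nat -> 'rV[R]_d) (x : 'rV[R]_d) (yn : nat -> S) (y : S)
  (c : nat -> R) (u : 'rV[R]_d)
  (hx : xn n @[n --> \oo] --> x)
  (hy : yn n @[n --> \oo] --> y)
  (hc1 : forall n, 1 <= c n)
  (hcmono : forall m n, (m <= n)%N -> c m <= c n)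
  (hcinf : c n @[n --> \oo] --> +oo)
  (hu : hc h (c n) (xn n) (yn n) @[n --> \oo] --> u) :
  h_infty h x y u.
Proof.
apply: (S1 c yn y x u hc1 hcmono hcinf hy).
set D := fun n => hc h (c n) x (yn n) - hc h (c n) (xn n) (yn n).
have bnd n : `|D n| <= L * Num.sqrt d%:R * `|x - xn n|.
  apply: le_trans (norm_le_enorm _ _ (D n)) _.
  rewrite /D /hc -scalerBr enormZ.
  have c0 : 0 < c n by apply: lt_le_trans (hc1 n).
  apply: (le_trans (ler_wpM2l (normr_ge0 _) (h_lip _ _ _))).
  rewrite -scalerBr enormZ (ger0_norm (ltW c0)) ger0_norm ?invr_ge0 ?(ltW c0) //.
  rewrite mulrCA mulKf ?gt_eqF //.
  by rewrite -mulrA ler_wpM2l ?(ltW L_gt0) // enorm_le.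
have D0 : D n @[n --> \oo] --> (0 : 'rV[R]_d).
  apply/cvgr0Pnorm_lt => e e0.
  set K := L * Num.sqrt d%:R + 1.
  have K0 : 0 < K by rewrite ltr_wpDl ?mulr_ge0 ?sqrtr_ge0 ?ltW.
  move/cvgrPdist_lt: hx => /(_ (e / K)) [|]; first by rewrite divr_gt0.
  move=> N _ HN; exists N => // n /HN Hn.
  apply: (le_lt_trans (bnd n)).
  apply: (@le_lt_trans _ _ (K * `|x - xn n|)).
    by rewrite ler_wpM2r ?normr_ge0 // lerDl.
  by rewrite -ltr_pdivlMl // mulrC.
have -> : (fun n => hc h (c n) x (yn n)) = (fun n => D n + hc h (c n) (xn n) (yn n)).
  by apply: funext => n; rewrite /D subrK.
by rewrite -[u]add0r; apply: cvgD.
Qed.
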